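(* Let $X$ be a hyperbolic approximation of a metric space $Z$, with vertex set $V$. If $v,v'\in V$ are not joined by a radial geodesic, then any branch point of $\{v,v'\}$ is a splitting point.
   Context: Hyperbolic approximation: let $(Z,d)$ be a metric space and fix $r$ with $0<r\le1/6$. For every $k\in\mathbb{Z}$ choose a maximal $r^k$-separated set $V_k\subset Z$ (distinct points at distance $\ge r^k$, maximal with this property). For $v\in V_k$ let $B(v)$ be the ball in $Z$ of radius $2r^k$ centred at $v$, $\bar B(v)$ the closed ball. The vertex set $V$ consists, for each $k$, of the balls $B(v)$, $v\in V_k$ (equal balls from the same level give the same vertex; equal balls at different levels are different vertices); a vertex from level $k$ has level $l(v)=k$, and we write $V_k$ also for the set of vertices of level $k$. Two vertices are joined by an edge iff they are on the same level and their closed balls intersect (horizontal edge), or they are on neighbouring levels $k,k+1$ and the ball of the level-$(k+1)$ vertex is contained in the ball of the level-$k$ vertex (radial edge). $X$ carries the path metric with all edges of length $1$. A radial geodesic is an edge path all of whose edges are radial and along which the level function is monotone. For $V'\subset V$, a vertex $u$ is a cone point of $V'$ if $l(u)\le\inf_{v\in V'}l(v)$ and every $v\in V'$ is connected to $u$ by a radial geodesic; a branch point of $V'$ is a cone point of maximal level. A vertex $v_k\in V_k$ is a splitting point if there is $v_{k+1}\in V_{k+1}$ with $B(v_{k+1})\subsetneq B(v_k)$. *)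

(* Defs.v *)
From Stdlib Require Import Reals ZArith.
Open Scope R_scope.
Set Implicit Arguments.

Definition is_metric {T : Type} (d : T -> T -> R) : Prop :=
  (forall x y, 0 <= d x y) /\
  (forall x y, d x y = 0 <-> x = y) /\
  (forall x y, d x y = d y x) /\
  (forall x y z, d x z <= d x y + d y z).

Definition separated {T : Type} (d : T -> T -> R) (eps : R) (S : T -> Prop) : Prop :=
  forall x y, S x -> S y -> x <> y -> eps <= d x y.

Definition maximal_separated {T : Type} (d : T -> T -> R) (eps : R) (S : T -> Prop) : Prop :=
  separated d eps S /\
  forall S' : T -> Prop, separated d eps S' -> (forall x, S x -> S' x) ->
    forall x, S' x -> S x.

Definition open_ball {T : Type} (d : T -> T -> R) (c : T) (rad : R) : T -> Prop :=
  fun x => d c x < rad.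

Definition subset {T : Type} (A B : T -> Prop) : Prop := forall x, A x -> B x.

(* A (candidate) vertex: a level k and a ball (a subset of T).  Equal balls at
   the same level are the same vertex; equal balls at different levels are
   different vertices. *)
Record vertex (T : Type) := mkVertex { lvl : Z ; vball : T -> Prop }.
Arguments mkVertex {T}.
Arguments lvl {T}.
Arguments vball {T}.

Section HypApprox.
Context {T : Type} (d : T -> T -> R) (r : R) (Vc : Z -> T -> Prop).

Definition is_vertex (u : vertex T) : Prop :=
  exists c, Vc (lvl u) c /\ vball u = open_ball d c (2 * powerRZ r (lvl u)).

Definition radial_edge (u w : vertex T) : Prop :=
  is_vertex u /\ is_vertex w /\
  ((lvl w = lvl u + 1 /\ subset (vball w) (vball u))%Z \/
   (lvl u = lvl w + 1 /\ subset (vball u) (vball w))%Z).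

Definition radial_geodesic_between (u w : vertex T) : Prop :=
  is_vertex u /\ is_vertex w /\
  exists (n : nat) (f : nat -> vertex T),
    f O = u /\ f n = w /\
    (forall i, (i < n)%nat -> radial_edge (f i) (f (S i))) /\
    ((forall i, (i < n)%nat -> (lvl (f i) <= lvl (f (S i)))%Z) \/
     (forall i, (i < n)%nat -> (lvl (f (S i)) <= lvl (f i))%Z)).

Definition cone_point (V' : vertex T -> Prop) (u : vertex T) : Prop :=
  is_vertex u /\
  (forall v, V' v -> (lvl u <= lvl v)%Z) /\
  (forall v, V' v -> radial_geodesic_between v u).

Definition branch_point (V' : vertex T -> Prop) (u : vertex T) : Prop :=
  cone_point V' u /\ forall u', cone_point V' u' -> (lvl u' <= lvl u)%Z.

Definition splitting_point (u : vertex T) : Prop :=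
  is_vertex u /\
  exists w, is_vertex w /\ lvl w = (lvl u + 1)%Z /\
    subset (vball w) (vball u) /\ vball w <> vball u.

End HypApprox.

(* Main.v *)
Require Import Defs.
From Stdlib Require Import Reals ZArith Lia Classical.
Open Scope R_scope.

Section L.
Context {T : Type} (d : T -> T -> R) (r : R) (Vc : Z -> T -> Prop).

Lemma edge_lvl {a b : vertex T} : radial_edge d r Vc a b ->
  (lvl b = lvl a + 1 \/ lvl a = lvl b + 1)%Z.
Proof. intros [_ [_ [[H _]|[H _]]]]; lia. Qed.

Lemma path_dec {n : nat} {f : nat -> vertex T} :
  (forall i, (i < n)%nat -> radial_edge d r Vc (f i) (f (S i))) ->
  (forall i, (i < n)%nat -> (lvl (f (S i)) <= lvl (f i))%Z) ->
  forall i, (i <= n)%nat -> lvl (f i) = (lvl (f O) - Z.of_nat i)%Z.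
Proof.
  intros He Hm i. induction i; intros Hi. simpl; lia.
  assert (Hl := edge_lvl (He i ltac:(lia))). specialize (Hm i ltac:(lia)).
  specialize (IHi ltac:(lia)). destruct Hl; lia.
Qed.

Lemma path_inc {n : nat} {f : nat -> vertex T} :
  (forall i, (i < n)%nat -> radial_edge d r Vc (f i) (f (S i))) ->
  (forall i, (i < n)%nat -> (lvl (f i) <= lvl (f (S i)))%Z) ->
  forall i, (i <= n)%nat -> lvl (f i) = (lvl (f O) + Z.of_nat i)%Z.
Proof.
  intros He Hm i. induction i; intros Hi. simpl; lia.
  assert (Hl := edge_lvl (He i ltac:(lia))). specialize (Hm i ltac:(lia)).
  specialize (IHi ltac:(lia)). destruct Hl; lia.
Qed.

Lemma decomp (x u : vertex T) : radial_geodesic_between d r Vc x u ->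
  (lvl u <= lvl x)%Z ->
  x = u \/ exists w, radial_geodesic_between d r Vc x w /\ is_vertex d r Vc w /\
    lvl w = (lvl u + 1)%Z /\ subset (vball w) (vball u) /\ (lvl w <= lvl x)%Z.
Proof.
  intros [Hx [Hu [n [f [H0 [Hn [He Hm]]]]]]] Hle.
  destruct n as [|m]. { left. congruence. }
  destruct Hm as [Hm|Hm].
  - pose proof (path_inc He Hm (S m) ltac:(lia)). subst. lia.
  - right. pose proof (path_dec He Hm (S m) ltac:(lia)) as E1.
    pose proof (path_dec He Hm m ltac:(lia)) as E2.
    exists (f m). assert (Hem := He m ltac:(lia)).
    destruct Hem as [Hvm [Hvs [[A B]|[A B]]]].
    + lia.
    + subst. repeat split; auto; try lia.
      exists m, f. split; [auto|split; [auto|split]].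
      * intros; apply He; lia.
      * right; intros; apply Hm; lia.
Qed.

Lemma edge_sym {a b} : radial_edge d r Vc a b -> radial_edge d r Vc b a.
Proof. intros [A [B [C|C]]]; repeat split; auto. Qed.

Lemma geo_rev x y : radial_geodesic_between d r Vc x y -> radial_geodesic_between d r Vc y x.
Proof.
  intros [Hx [Hy [n [f [H0 [Hn [He Hm]]]]]]].
  split; [auto|split; [auto|]].
  exists n, (fun i => f (n - i)%nat). split; [|split; [|split]].
  - rewrite Nat.sub_0_r; auto.
  - rewrite Nat.sub_diag; auto.
  - intros i Hi. apply edge_sym. cbv beta. replace (n - i)%nat with (S (n - S i)) by lia.
    apply He; lia.
  - destruct Hm as [Hm|Hm]; [right|left]; intros i Hi; cbv beta;
    replace (n - i)%nat with (S (n - S i)) by lia; apply Hm; lia.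
Qed.

End L.

Theorem lemma3p4 (T : Type) (d : T -> T -> R) (r : R) (Vc : Z -> T -> Prop)
  (hd : is_metric d) (hr : 0 < r <= 1/6)
  (hV : forall k : Z, maximal_separated d (powerRZ r k) (Vc k))
  (v v' : vertex T) (hv : is_vertex d r Vc v) (hv' : is_vertex d r Vc v')
  (hnot : ~ radial_geodesic_between d r Vc v v')
  (u : vertex T) (hu : branch_point d r Vc (fun w => w = v \/ w = v') u) :
  splitting_point d r Vc u.
Proof.
  destruct hu as [[Hu [Hl Hg]] Hmax].
  assert (Lv := Hl v (or_introl eq_refl)). assert (Lv' := Hl v' (or_intror eq_refl)).
  assert (Gv := Hg v (or_introl eq_refl)). assert (Gv' := Hg v' (or_intror eq_refl)).
  destruct (decomp d r Vc _ _ Gv Lv) as [E|[w [Gw [Hw [Lw [Sw Lwv]]]]]].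
  { subst. exfalso. apply hnot. eapply geo_rev; eauto. }
  destruct (decomp d r Vc _ _ Gv' Lv') as [E|[w' [Gw' [Hw' [Lw' [Sw' Lwv']]]]]].
  { subst. exfalso. auto. }
  apply NNPP; intro Hns.
  assert (Bw : vball w = vball u).
  { apply NNPP; intro N. apply Hns. split; auto. exists w; auto. }
  assert (Bw' : vball w' = vball u).
  { apply NNPP; intro N. apply Hns. split; auto. exists w'; auto. }
  assert (Eww : w = w').
  { destruct w, w'; simpl in *; subst. f_equal; congruence. }
  subst w'.
  assert (C : cone_point d r Vc (fun x => x = v \/ x = v') w).
  { split; auto. split.
    - intros x [->| ->]; lia.
    - intros x [->| ->]; auto. }
  specialize (Hmax w C). lia.
Qed.
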